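(* Let $k\ge2$, $p\in[0,1]$, and consider the random complex $Y^k(n,p)$. For every $(k-2)$-face $H\in\binom{[n]}{k-1}$, the random graph $\mathrm{lk}(H,Y^k(n,p))$ (on vertex set $[n]\setminus H$) has the distribution of the binomial random graph $G(n-k+1,p/2)$.
   Context: $Y^k(n,p)$ is the random $k$-dimensional complex on vertex set $[n]$ with complete $(k-1)$-skeleton (all subsets of size at most $k$ are faces) constructed as follows: choose $a:\binom{[n]}{k}\to\mathbb Z_2$ with the values $a(F)$ independent and uniform; call $H\in\binom{[n]}{k+1}$ good if $H$ contains an even number of $k$-subsets $F$ with $a(F)=1$; each good $H$ is added as a $k$-face independently with probability $p$. The link $\mathrm{lk}(H,Y)$ of $H\in\binom{[n]}{k-1}$ is the graph on $[n]\setminus H$ with edges $e$ such that $H\cup e$ is a $k$-face. $G(m,q)$ is the random graph on $m$ vertices with each edge present independently with probability $q$. *)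

(* Defs.v *)
From HB Require Import structures.
From mathcomp Require Import all_boot all_order all_algebra.
Set Implicit Arguments. Unset Strict Implicit. Unset Printing Implicit Defensive.
Import Order.TTheory GRing.Theory Num.Theory.
Local Open Scope ring_scope.

(* A labelling a : binom([n],k) -> Z_2 is encoded as a boolean function on all
   subsets; only its values on k-sets matter.  We draw a uniformly among all
   functions {set 'I_n} -> bool, so its values on the k-sets are independent
   and uniform (the extra coordinates are irrelevant independent noise). *)
Definition labelling (n : nat) := {ffun {set 'I_n} -> bool}.

Definition label_weight (R : numFieldType) (n : nat) (a : labelling n) : R :=
  1 / (#|{: labelling n}|)%:R.

Definition good (n k : nat) (a : labelling n) (H : {set 'I_n}) : bool :=
  (#|H| == k.+1) &&
  ~~ odd #|[set F in powerset H | (#|F| == k) && a F]|.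

Definition good_set (n k : nat) (a : labelling n) : {set {set 'I_n}} :=
  [set H | good k a H].

Definition faces_weight (R : numFieldType) (n k : nat) (p : R)
    (a : labelling n) (S : {set {set 'I_n}}) : R :=
  if S \subset good_set k a
  then p ^+ #|S| * (1 - p) ^+ (#|good_set k a| - #|S|)
  else 0.

Definition link (n : nat) (S : {set {set 'I_n}}) (H : {set 'I_n})
    : {set {set 'I_n}} :=
  [set e : {set 'I_n} | [&& #|e| == 2, [disjoint e & H] & (H :|: e) \in S]].

Definition prob_link_eq (R : numFieldType) (n k : nat) (p : R)
    (H : {set 'I_n}) (g : {set {set 'I_n}}) : R :=
  \sum_(a : labelling n) label_weight R a *
    \sum_(S : {set {set 'I_n}}) faces_weight k p a S * (link S H == g)%:R.

Definition complete_edges (n : nat) (V : {set 'I_n}) : {set {set 'I_n}} :=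
  [set e : {set 'I_n} | (#|e| == 2) && (e \subset V)].

Definition gnp_prob (R : numFieldType) (n : nat) (V : {set 'I_n}) (q : R)
    (g : {set {set 'I_n}}) : R :=
  if g \subset complete_edges V
  then q ^+ #|g| * (1 - q) ^+ (#|complete_edges V| - #|g|)
  else 0.

(* Main.v *)
Require Import Defs.
From HB Require Import structures.
From mathcomp Require Import all_boot all_order all_algebra.
From mathcomp Require Import zify ring lra.
Import Order.TTheory GRing.Theory Num.Theory.
Local Open Scope ring_scope.
Set Implicit Arguments. Unset Strict Implicit.


Lemma inFS (X : finType) (a : {ffun X -> bool}) x : (x \in FinSet a) = a x.
Proof. by rewrite unfold_in /= unlock. Qed.
Lemma sum_ffun_prod (R : comNzRingType) (X : finType) (F : X -> bool -> R) :
  \sum_(a : {ffun X -> bool}) \prod_x F x (a x) = \prod_x (F x true + F x false).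
Proof. rewrite -bigA_distr_bigA; apply: eq_bigr => x _; by rewrite big_bool. Qed.
Lemma sum_set_prod (R : comNzRingType) (X : finType) (F : X -> bool -> R) :
  \sum_(S : {set X}) \prod_x F x (x \in S) = \prod_x (F x true + F x false).
Proof.
rewrite -sum_ffun_prod (reindex (fun f : {ffun X -> bool} => FinSet f)) /=.
  by apply: eq_bigr => a _; apply: eq_bigr => x _; rewrite inFS.
by exists (@finfun_of_set X) => [f|[f]].
Qed.

Lemma indep (R : comNzRingType) (I X : finType) (E : {set I}) (c : I -> X)
  (f : I -> bool -> R) : {in E &, injective c} ->
 \sum_(a : {ffun X -> bool}) \prod_(e in E) f e (a (c e)) =
  \prod_(e in E) (f e true + f e false) * 2%:R ^+ (#|X| - #|E|).
Proof.
move=> inj.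
pose F x b := if [pick e in E | c e == x] is Some e then f e b else 1.
have HF e : e \in E -> F (c e) = f e.
  move=> He; rewrite /F; case: pickP => [e' /andP[He' /eqP ce]|/(_ e)].
    by rewrite (inj _ _ He' He ce).
  by rewrite He eqxx.
have Hn x : x \notin c @: E -> forall b, F x b = 1.
  move=> Hx b; rewrite /F; case: pickP => [e' /andP[He' /eqP ce]| //].
  by rewrite -ce imset_f in Hx.
have P (a : {ffun X -> bool}) : \prod_(e in E) f e (a (c e)) = \prod_x F x (a x).
  transitivity (\prod_(e in E) F (c e) (a (c e))).
    by apply: eq_bigr => e He; rewrite HF.
  rewrite -(big_imset (fun x => F x (a x)) inj) /=.
  rewrite [RHS](bigID (mem (c @: E))) /= [X in _ = _ * X]big1 ?mulr1 //.
  by move=> x Hx; rewrite Hn.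
rewrite (eq_bigr _ (fun a _ => P a)).
rewrite sum_ffun_prod (bigID (mem (c @: E))) /=.
congr (_ * _).
  rewrite (big_imset (fun x => F x true + F x false) inj) /=.
  by apply: eq_bigr => e He; rewrite HF.
rewrite (eq_bigr (fun _ => 2%:R)); last by move=> x Hx; rewrite !Hn.
rewrite prodr_const; congr (_ ^+ _).
have := cardC (mem (c @: E)); rewrite card_in_imset // => <-.
by rewrite addKn.
Qed.


Lemma weight (R : comNzRingType) (T : finType) (G S : {set T}) (p : R) :
  (if S \subset G then p ^+ #|S| * (1 - p) ^+ (#|G| - #|S|) else 0) =
  \prod_x (if x \in G then (if x \in S then p else 1 - p) else (x \notin S)%:R).
Proof.
case: ifP => sSG.
  rewrite (bigID (mem G)) /= [X in _ = _ * X]big1 ?mulr1; last first.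
    move=> x /= xG; have xS : x \notin S by apply: contra xG; apply: (subsetP sSG).
    by rewrite (negbTE xG) xS.
  rewrite (bigID (mem S)) /=.
  rewrite (eq_bigl (fun i => i \in S)) => [|x]; last first.
    by rewrite /=; case xS: (x \in S); rewrite ?andbF ?andbT //; exact: (subsetP sSG).
  rewrite [X in _ = _ * X](eq_bigl (fun i => i \in G :\: S)) => [|x]; last by rewrite !inE andbC.
  rewrite (eq_bigr (fun _ => p)) => [|x xS]; last by have xS' : x \in S := xS; rewrite (subsetP sSG _ xS') xS'.
  rewrite [X in _ = _ * X](eq_bigr (fun _ => 1 - p)) => [|x]; last first.
    by move=> /setDP[xG xS]; rewrite xG (negbTE xS).
  by rewrite !prodr_const cardsDS.
have /subsetPn[x xS xG] := negbT sSG.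
by rewrite (bigD1 x) //= (negbTE xG) xS mul0r.
Qed.


Lemma indic (R : comNzRingType) (T : finType) (S B C : {set T}) : C \subset B ->
  ((S :&: B == C)%:R : R) = \prod_x (if x \in B then ((x \in S) == (x \in C))%:R else 1).
Proof.
move=> sCB; case: eqP => [<-|ne].
  by rewrite big1 // => x _; case: ifP => // xB; rewrite inE xB andbT eqxx.
have [x Hx] : exists x, (x \in S :&: B) != (x \in C).
  case: (boolP [exists x, (x \in S :&: B) != (x \in C)]) => [/existsP//|/existsPn H].
  by exfalso; apply: ne; apply/setP => x; apply/eqP; apply/negPn; apply: H.
have xB : x \in B.
  move: Hx; rewrite inE; case xB: (x \in B) => //; rewrite andbF.
  by apply: contraNT => _; apply/negP => xC; move: (subsetP sCB x xC); rewrite xB.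
rewrite (bigD1 x) //= xB; move: Hx; rewrite inE xB andbT => /negbTE ->.
by rewrite mul0r.
Qed.
Lemma inner (R : comNzRingType) (T : finType) (G B C : {set T}) (p : R) : C \subset B ->
  \sum_(S : {set T}) (if S \subset G then p ^+ #|S| * (1 - p) ^+ (#|G| - #|S|) else 0) * (S :&: B == C)%:R
  = \prod_(x in B) (if x \in G then (if x \in C then p else 1 - p) else (x \notin C)%:R).
Proof.
move=> sCB.
pose F := fun x b => (if x \in G then (if b then p else 1 - p) else (~~ b)%:R) *
     (if x \in B then (b == (x \in C))%:R else 1).
transitivity (\sum_(S : {set T}) \prod_x F x (x \in S)).
  apply: eq_bigr => S _; rewrite weight indic // -big_split /=.
  by apply: eq_bigr.
rewrite (@sum_set_prod R T F) /F (bigID (mem B)) /= [X in _ * X]big1 ?mulr1.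
  apply: eq_bigr => x xB; rewrite xB.
  case: (x \in G); case: (x \in C); rewrite /=.
  - by rewrite mulr1 mulr0 addr0.
  - by rewrite mulr1 mulr0 add0r.
  - by rewrite mulr1 mulr0 addr0.
  - by rewrite mulr1 mulr0 add0r.
move=> x /negbTE ->; rewrite !mulr1.
by case: (x \in G); rewrite /= ?add0r // addrC subrK.
Qed.

Lemma DU_disj n (H H0 e : {set 'I_n}) : H0 \subset H -> e \subset ~: H -> (H0 :|: e) :\: H = e.
Proof.
move=> sH sub; apply/setP=> x; rewrite !inE.
case xe: (x \in e); case xH: (x \in H) => //=.
- by have := subsetP sub x xe; rewrite inE xH.
- by rewrite orbT.
- by rewrite orbF; apply/negP => /(subsetP sH); rewrite xH.
Qed.

Lemma inj_on n (H H0 : {set 'I_n}) : H0 \subset H ->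
  {in complete_edges (~: H) &, injective (fun e => H0 :|: e)}.
Proof.
move=> sH e e'; rewrite !inE => /andP[_ s] /andP[_ s'] eq.
by rewrite -(DU_disj sH s) eq (DU_disj sH s').
Qed.

Lemma link_E n (S : {set {set 'I_n}}) (H : {set 'I_n}) :
  link S H = [set e in complete_edges (~: H) | H :|: e \in S].
Proof.
apply/setP=> e; rewrite !inE subsets_disjoint setCK; by case: (#|e| == 2).
Qed.

Lemma card_disjU n (A B : {set 'I_n}) : B \subset ~: A -> #|A :|: B| = (#|A| + #|B|)%N.
Proof.
move=> sub; rewrite cardsU; suff -> : A :&: B = set0 by rewrite cards0 subn0.
apply/setP=> x; rewrite !inE; case xB: (x \in B); rewrite ?andbF ?andbT //.
by move: (subsetP sub x xB); rewrite inE => /negbTE.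
Qed.

Definition Qs n k (H0 H e : {set 'I_n}) : {set {set 'I_n}} :=
  [set F in powerset (H :|: e) | #|F| == k] :\ (H0 :|: e).
Definition rr n k (H0 H e : {set 'I_n}) (a : labelling n) : bool :=
  odd #|[set F in Qs k H0 H e | a F]|.

Lemma sub_compl n (H H0 e : {set 'I_n}) : H0 \subset H -> e \subset ~: H -> e \subset ~: H0.
Proof.
move=> sH se; apply/subsetP => x xe; rewrite inE; apply/negP => /(subsetP sH) xH.
by move: (subsetP se x xe); rewrite inE xH.
Qed.

Lemma good_split n k (H H0 e : {set 'I_n}) (a : labelling n) : (2 <= k)%N ->
  #|H| = k.-1 -> H0 \subset H -> #|H0| = k.-2 -> e \in complete_edges (~: H) ->
  good k a (H :|: e) = ~~ (a (H0 :|: e) (+) rr k H0 H e a).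
Proof.
move=> hk hH sH hH0; rewrite inE => /andP[/eqP ce se].
rewrite /good card_disjU // ce hH.
have -> : (k.-1 + 2)%N = k.+1 by lia.
rewrite eqxx /=; congr (~~ _).
set c := H0 :|: e.
set A := [set F in powerset (H :|: e) | (#|F| == k) && a F].
have cc : #|c| = k by rewrite card_disjU ?ce ?hH0 ?(sub_compl sH se) //; lia.
have cs : c \subset H :|: e by apply: setSU.
rewrite (cardsD1 c A) oddD.
have -> : (c \in A) = a c by rewrite inE powersetE cs cc eqxx.
suff -> : A :\ c = [set F in Qs k H0 H e | a F] by rewrite oddb.
rewrite /A /Qs; apply/setP => F; rewrite !inE.
by case: (F == c); case: (a F); rewrite /= ?andbT ?andbF.
Qed.

Lemma Q_avoid n k (H H0 e e' : {set 'I_n}) : H0 \subset H ->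
  e \in complete_edges (~: H) -> e' \in complete_edges (~: H) ->
  (H0 :|: e') \notin Qs k H0 H e.
Proof.
move=> sH; rewrite !inE => /andP[/eqP ce se] /andP[/eqP ce' se'].
rewrite /Qs; apply/negP => /and3P[ne sub _].
have sub' : e' \subset e.
  apply/subsetP => x xe'.
  have : x \in H :|: e by apply: (subsetP sub); rewrite inE xe' orbT.
  rewrite inE => /orP[xH|//].
  by move: (subsetP se' x xe'); rewrite inE xH.
have /eqP eq : e' == e by rewrite eqEcard sub' ce ce'.
by rewrite eq eqxx in ne.
Qed.

Definition sig n k (H0 H : {set 'I_n}) (a : labelling n) : labelling n :=
  [ffun x => a x (+) [exists e in complete_edges (~: H), (H0 :|: e == x) && rr k H0 H e a]].

Lemma r_sig n k (H0 H e : {set 'I_n}) (a : labelling n) : H0 \subset H ->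
  e \in complete_edges (~: H) -> rr k H0 H e (sig k H0 H a) = rr k H0 H e a.
Proof.
move=> sH eE; rewrite /rr.
suff -> : [set F in Qs k H0 H e | sig k H0 H a F] = [set F in Qs k H0 H e | a F] by [].
apply: eq_finset => F /=; case FQ: (F \in Qs k H0 H e) => //=.
rewrite ffunE; case: existsP => [[e' /andP[e'E /andP[/eqP eqF _]]]|]; last by rewrite addbF.
by move: (Q_avoid k sH eE e'E); rewrite eqF FQ.
Qed.

Lemma sig_c n k (H0 H e : {set 'I_n}) (a : labelling n) : H0 \subset H ->
  e \in complete_edges (~: H) ->
  sig k H0 H a (H0 :|: e) = a (H0 :|: e) (+) rr k H0 H e a.
Proof.
move=> sH eE; rewrite ffunE; congr (_ (+) _).
apply/existsP/idP => [[e' /andP[e'E /andP[/eqP eq r]]]|r].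
  by rewrite -(inj_on sH e'E eE eq).
by exists e; rewrite eE eqxx r.
Qed.

Lemma sig_inv n k (H0 H : {set 'I_n}) : H0 \subset H ->
  cancel (sig k H0 H) (sig k H0 H).
Proof.
move=> sH a; apply/ffunP => x.
rewrite [LHS]ffunE.
have -> : [exists e in complete_edges (~: H), (H0 :|: e == x) && rr k H0 H e (sig k H0 H a)]
  = [exists e in complete_edges (~: H), (H0 :|: e == x) && rr k H0 H e a].
  apply: eq_existsb => e; case eE: (e \in complete_edges (~: H)) => //=.
  by rewrite r_sig.
by rewrite ffunE -addbA addbb addbF.
Qed.

Lemma good_sig n k (H H0 e : {set 'I_n}) (a : labelling n) : (2 <= k)%N ->
  #|H| = k.-1 -> H0 \subset H -> #|H0| = k.-2 -> e \in complete_edges (~: H) ->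
  good k (sig k H0 H a) (H :|: e) = ~~ a (H0 :|: e).
Proof.
move=> hk hH sH hH0 eE.
by rewrite (good_split _ hk hH sH hH0 eE) sig_c // r_sig // -addbA addbb addbF.
Qed.

Lemma link_eq n (S : {set {set 'I_n}}) (H : {set 'I_n}) (g : {set {set 'I_n}}) :
  g \subset complete_edges (~: H) ->
  (link S H == g) = (S :&: [set H :|: e | e in complete_edges (~: H)] == [set H :|: e | e in g]).
Proof.
move=> sgE; rewrite link_E.
have inj := inj_on (subxx H).
apply/eqP/eqP => [L|h]; apply/setP => x.
  rewrite inE; apply/andP/imsetP => [[xS /imsetP[e eE xe]]|[e eg ->]].
    by exists e => //; rewrite -L inE eE -xe xS.
  have eE := subsetP sgE e eg.
  split; last by apply: imset_f.
  by move: eg; rewrite -L inE eE.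
rewrite inE; apply/andP/idP => [[xE xS]|xg].
  have : H :|: x \in S :&: [set H :|: e | e in complete_edges (~: H)].
    by rewrite inE xS imset_f.
  rewrite h => /imsetP[e eg eq].
  by rewrite (inj _ _ xE (subsetP sgE e eg) eq).
have xE := subsetP sgE x xg; split => //.
have : H :|: x \in [set H :|: e | e in g] by apply: imset_f.
by rewrite -h inE => /andP[].
Qed.

Lemma inner_a (R : numFieldType) n k (p : R) (a : labelling n) (H : {set 'I_n})
  (g : {set {set 'I_n}}) : g \subset complete_edges (~: H) ->
  \sum_(S : {set {set 'I_n}}) faces_weight k p a S * (link S H == g)%:R =
  \prod_(e in complete_edges (~: H))
     (if good k a (H :|: e) then (if e \in g then p else 1 - p) else (e \notin g)%:R).
Proof.
move=> sgE.
have inj := inj_on (subxx H).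
rewrite (eq_bigr (fun S => faces_weight k p a S *
   (S :&: [set H :|: e | e in complete_edges (~: H)] == [set H :|: e | e in g])%:R));
  last by move=> S _; rewrite link_eq.
rewrite /faces_weight inner; last by apply: imsetS.
rewrite big_imset //=; apply: eq_bigr => e eE.
have -> : (H :|: e \in [set H :|: e0 | e0 in g]) = (e \in g).
  apply/imsetP/idP => [[e' e'g eq]|eg]; last by exists e.
  by rewrite (inj _ _ eE (subsetP sgE e' e'g) eq).
by rewrite inE.
Qed.

Lemma closed_form (R : comNzRingType) (T : finType) (E g : {set T}) (x y : R) :
  g \subset E -> \prod_(e in E) (if e \in g then x else y) = x ^+ #|g| * y ^+ (#|E| - #|g|).
Proof.
move=> sgE; rewrite (big_setID g) /=.
rewrite (eq_bigr (fun _ => x)) => [|e]; last by rewrite inE => /andP[_ ->].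
rewrite [X in _ * X](eq_bigr (fun _ => y)) => [|e]; last first.
  by rewrite inE => /andP[/negbTE ->].
by rewrite !prodr_const (setIidPr sgE) cardsDS.
Qed.

Lemma cancel2 (R : realFieldType) (a b : nat) (P : R) :
  1 / (2 ^+ a * 2 ^+ b) * (2 ^+ a * P * 2 ^+ b) = P.
Proof.
have h2 : (2 : R) != 0 by rewrite pnatr_eq0.
have ha : (2 : R) ^+ a != 0 by rewrite expf_neq0.
have hb : (2 : R) ^+ b != 0 by rewrite expf_neq0.
field; by rewrite ?ha ?hb ?h2 ?mulf_neq0.
Qed.

Theorem lemma5p1 (R : realFieldType) (n k : nat) (p : R)
    (hk : (2 <= k)%N) (hp0 : 0 <= p) (hp1 : p <= 1)
    (H : {set 'I_n}) (hH : #|H| = k.-1)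
    (g : {set {set 'I_n}}) :
  prob_link_eq k p H g = gnp_prob (~: H) (p / 2) g.
Proof.
rewrite /prob_link_eq /gnp_prob.
set E := complete_edges (~: H).
case: ifP => sgE; last first.
  apply: big1 => a _; rewrite big1 ?mulr0 // => S _.
  have sub : link S H \subset E.
    by rewrite link_E; apply/subsetP => e; rewrite inE => /andP[].
  case: eqP => [L|_]; last by rewrite mulr0.
  by move: sub; rewrite L sgE.
pose F (e : {set 'I_n}) (b : bool) : R :=
  if b then (if e \in g then p else 1 - p) else (e \notin g)%:R.
rewrite (eq_bigr (fun a => label_weight R a * \prod_(e in E) F e (good k a (H :|: e))));
  last by move=> a _; rewrite inner_a.
rewrite /label_weight -big_distrr /=.
have [h0 h0H] : exists h0, h0 \in H by apply/set0Pn; rewrite -card_gt0 hH; lia.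
set H0 := H :\ h0.
have sH0 : H0 \subset H by apply: subD1set.
have cH0 : #|H0| = k.-2 by move: (cardsD1 h0 H); rewrite h0H hH -/H0; lia.
rewrite (reindex_inj (can_inj (sig_inv k sH0))) /=.
rewrite (eq_bigr (fun a : labelling n => \prod_(e in E) (fun e b => F e (~~ b)) e (a (H0 :|: e))));
  last by move=> a _; apply: eq_bigr => e eE; rewrite good_sig.
rewrite (@indep R _ _ E (fun e => H0 :|: e) (fun e b => F e (~~ b)) (inj_on sH0)).
rewrite -(closed_form (p / 2) (1 - p / 2) sgE).
have -> : \prod_(e in E) (F e (~~ true) + F e (~~ false)) =
    2 ^+ #|E| * \prod_(e in E) (if e \in g then p / 2 else 1 - p / 2).
  rewrite -prodr_const -big_split /=; apply: eq_bigr => e _; rewrite /F /=.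
  case: (e \in g) => /=.
    by field.
  by field.
rewrite card_ffun card_bool natrX.
set P := \prod_(e in E) _.
have mN : (#|E| <= #|finset_set_of__canonical__fintype_Finite 'I_n|)%N by apply: max_card.
rewrite -{1}(subnKC mN) exprD.
by apply: cancel2.
Qed.
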